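(* Let $r\ge2$, $N\ge r-1$, $d\ge1$ be integers. For any almost $r$-injective function $f\colon\Delta_N\to\mathbb{R}^d$, we have $$\delta(f)\ge\sqrt{2}\cdot\sin\big(\alpha^{(r)}(f)/2\big)\cdot\kappa^{(r)}(f).$$
   Context: $\Delta_N$ is the geometric $N$-simplex. $f$ is almost $r$-injective if for any $r$ pairwise disjoint faces $\sigma_1,\dots,\sigma_r$ of $\Delta_N$, $f(\sigma_1)\cap\dots\cap f(\sigma_r)=\emptyset$. $\mathrm{Conf}_r^{\Delta}(\Delta_N)=\{(x_1,\dots,x_r)\in(\Delta_N)^{\times r}: \text{the } x_i \text{ lie in pairwise disjoint faces}\}$ with the subspace topology. $W_r^{\oplus d}=\{(z_1,\dots,z_r)\in(\mathbb{R}^d)^{\oplus r}: \sum z_i=0\}$, $S(W_r^{\oplus d})$ its unit sphere with geodesic metric $d(u,v)=\arccos\langle u,v\rangle$, $\nu(v)=v/\|v\|$. $\mathrm{Conf}_r^{\Delta}(f)(x_1,\dots,x_r)=\big(f(x_i)-\tfrac1r\sum_jf(x_j)\big)_{i=1}^r$, and $\alpha^{(r)}(f)=\delta(\nu\circ\mathrm{Conf}_r^{\Delta}(f))$. $\kappa^{(r)}(f)=\inf_{(x_1,\dots,x_r)\in\mathrm{Conf}_r^{\Delta}(\Delta_N)}\frac1r\sqrt{\sum_{i,j=1}^r\|f(x_i)-f(x_j)\|^2}$. For a topological space $X$ and metric space $Y$, $\delta(h)=\inf\{\delta\ge 0 : \text{for every } x\in X \text{ there is an open neighborhood } U_x \text{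 with } \operatorname{diam}(h(U_x))\le\delta\}$; $\delta(f)$ uses the Euclidean metric on $\mathbb{R}^d$. *)

(* Defs.v *)
From mathcomp Require Import all_boot all_order all_algebra.
From mathcomp Require Import all_classical all_reals all_analysis.
Set Implicit Arguments. Unset Strict Implicit. Unset Printing Implicit Defensive.
Import Order.TTheory GRing.Theory Num.Theory.
Local Open Scope classical_set_scope.
Local Open Scope ring_scope.

Section Defs.
Variable R : realType.

Definition enorm (I : finType) (v : I -> R) : R := Num.sqrt (\sum_(i : I) v i ^+ 2).
Definition enorm2 (I J : finType) (z : I -> J -> R) : R :=
  Num.sqrt (\sum_(i : I) \sum_(j : J) z i j ^+ 2).

Definition edist (I : finType) (u v : I -> R) : R := enorm (fun i => u i - v i).
Definition edist2 (I J : finType) (u v : I -> J -> R) : R :=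
  enorm2 (fun i j => u i j - v i j).

Definition is_open_d (E : Type) (dE : E -> E -> R) (O : set E) : Prop :=
  forall y, O y -> exists e : R, 0 < e /\ forall z, dE y z < e -> O z.

(* For X a subspace (subspace topology) of the metric space (E, dE), a map h
   into a metric space (Y, dY), and c >= 0: every x in X has an open
   neighbourhood U_x = O `&` X in X with diam(h(U_x)) <= c. *)
Definition delta_ok (E Y : Type) (dE : E -> E -> R) (X : set E)
  (dY : Y -> Y -> R) (h : E -> Y) (c : R) : Prop :=
  forall x, X x -> exists O : set E, is_open_d dE O /\ O x /\
    forall y z, X y -> O y -> X z -> O z -> dY (h y) (h z) <= c.

Definition delta (E Y : Type) (dE : E -> E -> R) (X : set E)
  (dY : Y -> Y -> R) (h : E -> Y) : \bar R :=
  ereal_inf [set c%:E | c in [set c : R | 0 <= c /\ delta_ok dE X dY h c]].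

Definition simplex (N : nat) : set ('I_N.+1 -> R) :=
  [set x | (forall i, 0 <= x i) /\ \sum_i x i = 1].

Definition face (N : nat) (S : {set 'I_N.+1}) : set ('I_N.+1 -> R) :=
  [set x | @simplex N x /\ forall i, i \notin S -> x i = 0].

(* r nonempty pairwise disjoint vertex sets, i.e. r pairwise disjoint faces. *)
Definition disjoint_faces (r N : nat) (S : 'I_r -> {set 'I_N.+1}) : Prop :=
  (forall i, S i != finset.set0) /\ (forall i j, i != j -> forall v, v \in S i -> v \notin S j).

Definition almost_r_injective (r N d : nat) (f : ('I_N.+1 -> R) -> ('I_d -> R)) : Prop :=
  forall S : 'I_r -> {set 'I_N.+1}, disjoint_faces S ->
    ~ (exists y : 'I_d -> R, forall i, exists x, face (S i) x /\ f x = y).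

Definition ConfD (r N : nat) : set ('I_r -> 'I_N.+1 -> R) :=
  [set x | exists S : 'I_r -> {set 'I_N.+1}, disjoint_faces S /\ forall i, face (S i) (x i)].

Definition Conff (r N d : nat) (f : ('I_N.+1 -> R) -> ('I_d -> R))
  (x : 'I_r -> 'I_N.+1 -> R) : 'I_r -> 'I_d -> R :=
  fun i k => f (x i) k - (r%:R)^-1 * \sum_(j < r) f (x j) k.

Definition nu (r d : nat) (v : 'I_r -> 'I_d -> R) : 'I_r -> 'I_d -> R :=
  fun i k => v i k / enorm2 v.

Definition geod (r d : nat) (u v : 'I_r -> 'I_d -> R) : R :=
  acos (\sum_i \sum_k u i k * v i k).

Definition delta_f (N d : nat) (f : ('I_N.+1 -> R) -> ('I_d -> R)) : \bar R :=
  delta (@edist _) (@simplex N) (@edist _) f.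

Definition alpha (r N d : nat) (f : ('I_N.+1 -> R) -> ('I_d -> R)) : \bar R :=
  delta (@edist2 _ _) (@ConfD r N) (@geod r d) (fun x => nu (Conff f x)).

Definition kappa (r N d : nat) (f : ('I_N.+1 -> R) -> ('I_d -> R)) : \bar R :=
  ereal_inf [set ((r%:R)^-1 *
      Num.sqrt (\sum_(i < r) \sum_(j < r) edist (f (x i)) (f (x j)) ^+ 2))%:E
    | x in @ConfD r N].

End Defs.
Arguments simplex {R} N.
Arguments ConfD {R} r N.
Arguments alpha {R} r {N d} f.
Arguments kappa {R} r {N d} f.
Arguments delta_f {R N d} f.
Arguments almost_r_injective {R} r {N d} f.

(* Main.v *)
Require Import Defs.
From mathcomp Require Import all_boot all_order all_algebra.
From mathcomp Require Import all_classical all_reals all_analysis.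
From mathcomp Require Import ring lra.
Import Order.TTheory GRing.Theory Num.Theory.
Local Open Scope ring_scope.

Section Aux.
Context {R : realType}.

Lemma sum_sq_shift (n : nat) (w : 'I_n -> R) (m : R) :
  \sum_i (w i - m) ^+ 2 = \sum_i w i ^+ 2 - 2 * m * \sum_i w i + n%:R * m ^+ 2.
Proof.
transitivity (\sum_i (w i ^+ 2 + (- (2 * m * w i)) + m ^+ 2)).
  by apply: eq_bigr => i _; ring.
rewrite !big_split /= sumrN -mulr_sumr sumr_const card_ord mulr_natl.
by rewrite mulr_natl.
Qed.

Lemma var_sum (n : nat) (w : 'I_n -> R) : (0 < n)%N ->
  \sum_i (w i - n%:R^-1 * \sum_j w j) ^+ 2 =
  \sum_i w i ^+ 2 - n%:R^-1 * (\sum_i w i) ^+ 2.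
Proof.
move=> n0; rewrite (sum_sq_shift _ w).
have nz : n%:R != 0 :> R by rewrite pnatr_eq0 -lt0n.
by field.
Qed.

Lemma pair_sum (n : nat) (w : 'I_n -> R) :
  \sum_i \sum_j (w i - w j) ^+ 2 =
  2 * n%:R * \sum_i w i ^+ 2 - 2 * (\sum_i w i) ^+ 2.
Proof.
under eq_bigr => i _ do under eq_bigr => j _ do rewrite -(sqrrN (w i - w j)) opprB.
under eq_bigr => i _ do rewrite (sum_sq_shift _ w (w i)).
rewrite !big_split /= sumrN sumr_const card_ord -mulr_sumr -mulr_suml -mulr_sumr.
rewrite mulr_natl.
rewrite -[in X in _ = X]mulr_natl; ring.
Qed.

Lemma pair_var (n : nat) (w : 'I_n -> R) : (0 < n)%N ->
  \sum_i \sum_j (w i - w j) ^+ 2 =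
  2 * n%:R * \sum_i (w i - n%:R^-1 * \sum_j w j) ^+ 2.
Proof.
move=> n0; rewrite pair_sum var_sum //.
have nz : n%:R != 0 :> R by rewrite pnatr_eq0 -lt0n.
by field.
Qed.

Lemma var_le (n : nat) (w : 'I_n -> R) :
  \sum_i (w i - n%:R^-1 * \sum_j w j) ^+ 2 <= \sum_i w i ^+ 2.
Proof.
case: n w => [|n] w; first by rewrite !big_ord0.
rewrite var_sum // lerBlDr lerDl mulr_ge0 // ?invr_ge0 ?ler0n // ?sqr_ge0.
done.
Qed.


Definition S2 {I J : finType} (A B : I -> J -> R) := \sum_i \sum_j A i j * B i j.

Lemma sq_comb {I J : finType} (A B : I -> J -> R) (l m : R) :
  \sum_i \sum_j (l * A i j + m * B i j) ^+ 2 =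
  l ^+ 2 * S2 A A + m ^+ 2 * S2 B B + 2 * l * m * S2 A B.
Proof.
transitivity (\sum_i \sum_j (l ^+ 2 * (A i j * A i j) + m ^+ 2 * (B i j * B i j)
     + 2 * l * m * (A i j * B i j))).
  by apply: eq_bigr => i _; apply: eq_bigr => j _; ring.
rewrite /S2 !mulr_sumr -!big_split /=; apply: eq_bigr => i _.
by rewrite !mulr_sumr -!big_split.
Qed.

Lemma S2_ge0 {I J : finType} (A : I -> J -> R) : 0 <= S2 A A.
Proof. by apply: sumr_ge0 => i _; apply: sumr_ge0 => j _; rewrite -expr2 sqr_ge0. Qed.

Lemma angle {I J : finType} (A B : I -> J -> R) (M K : R) :
  0 < M -> M <= S2 A A -> M <= S2 B B ->
  \sum_i \sum_j (A i j - B i j) ^+ 2 <= K ->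
  let a := Num.sqrt (S2 A A) in let b := Num.sqrt (S2 B B) in
  let p := \sum_i \sum_j (A i j / a) * (B i j / b) in
  [/\ -1 <= p, p <= 1 & 1 - K / (2 * M) <= p].
Proof.
move=> M0 MA MB DK a b p.
have a2 : a ^+ 2 = S2 A A by rewrite sqr_sqrtr // S2_ge0.
have b2 : b ^+ 2 = S2 B B by rewrite sqr_sqrtr // S2_ge0.
have a0 : 0 < a by rewrite sqrtr_gt0; exact: lt_le_trans MA.
have b0 : 0 < b by rewrite sqrtr_gt0; exact: lt_le_trans MB.
have pE : p = S2 A B / (a * b).
  rewrite /p /S2 mulr_suml; apply: eq_bigr => i _; rewrite mulr_suml.
  by apply: eq_bigr => j _; rewrite invfM; ring.
have C1 := sq_comb A B b (- a).
have C2 := sq_comb A B b a.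
have C3 := sq_comb A B 1 (- 1).
have G1 : 0 <= \sum_i \sum_j (b * A i j + - a * B i j) ^+ 2.
  by apply: sumr_ge0 => i _; apply: sumr_ge0 => j _; rewrite sqr_ge0.
have G2 : 0 <= \sum_i \sum_j (b * A i j + a * B i j) ^+ 2.
  by apply: sumr_ge0 => i _; apply: sumr_ge0 => j _; rewrite sqr_ge0.
have E3 : \sum_i \sum_j (1 * A i j + - 1 * B i j) ^+ 2 = \sum_i \sum_j (A i j - B i j) ^+ 2.
  by apply: eq_bigr => i _; apply: eq_bigr => j _; rewrite mul1r mulN1r.
rewrite E3 in C3.
rewrite -a2 -b2 in C1 C2 C3.
set P := S2 A B in C1 C2 C3 pE.
have ab0 : 0 < a * b by rewrite mulr_gt0.
have h1 : P <= a * b.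
  have : 0 <= a * b * (a * b - P) by nra.
  rewrite pmulr_rge0 //; lra.
have h2 : - (a * b) <= P.
  have : 0 <= a * b * (a * b + P) by nra.
  rewrite pmulr_rge0 //; lra.
have hab : 0 <= (a - b) ^+ 2 := sqr_ge0 _.
have h3 : a * b - P <= K / 2 by nra.
have abM : M <= a * b.
  have : M ^+ 2 <= (a * b) ^+ 2 by rewrite exprMn a2 b2; nra.
  nra.
rewrite pE; split.
- by rewrite ler_pdivlMr // mulN1r.
- by rewrite ler_pdivrMr // mul1r.
- rewrite ler_pdivlMr //.
  have K0 : 0 <= K by nra.
  have q0 : 0 <= K / (2 * M) by rewrite divr_ge0 // mulr_ge0 // ltW.
  have qM : K / (2 * M) * M = K / 2.
    have : M != 0 by rewrite gt_eqF.
    by move=> ?; field.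
  nra.
Qed.


Lemma acos_anti (x y : R) : -1 <= x -> x <= y -> y <= 1 -> acos y <= acos x.
Proof.
move=> x1 xy y1.
have xI : -1 <= x <= 1 by rewrite x1 /= (le_trans xy y1).
have yI : -1 <= y <= 1 by rewrite y1 andbT (le_trans x1 xy).
rewrite leNgt; apply/negP => H.
have ix : acos x \in `[0, pi] by rewrite in_itv /= acos_ge0 // acos_lepi.
have iy : acos y \in `[0, pi] by rewrite in_itv /= acos_ge0 // acos_lepi.
have := H; rewrite -(ltr_cos ix iy).
rewrite !acosK ?in_itv //=.
by rewrite ltNge xy.
Qed.

Lemma edist_le2 {I J : finType} (y z : I -> J -> R) i :
  Defs.edist (y i) (z i) <= edist2 y z.
Proof.
rewrite /Defs.edist /edist2 /enorm /enorm2 ler_sqrt; last first.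
  by apply: sumr_ge0 => i' _; apply: sumr_ge0 => j _; rewrite sqr_ge0.
rewrite (bigD1 i) //= lerDl; apply: sumr_ge0 => i' _; apply: sumr_ge0 => j _.
by rewrite sqr_ge0.
Qed.

Lemma pair_conf (r N d : nat) (f : ('I_N.+1 -> R) -> ('I_d -> R))
  (x : 'I_r -> 'I_N.+1 -> R) : (0 < r)%N ->
  \sum_i \sum_j Defs.edist (f (x i)) (f (x j)) ^+ 2 =
  2 * r%:R * S2 (Conff f x) (Conff f x).
Proof.
move=> r0.
have E : forall i j, Defs.edist (f (x i)) (f (x j)) ^+ 2 =
    \sum_k (f (x i) k - f (x j) k) ^+ 2.
  by move=> i j; rewrite /Defs.edist /enorm sqr_sqrtr // sumr_ge0 // => k _; rewrite sqr_ge0.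
under eq_bigr => i _ do under eq_bigr => j _ do rewrite E.
under eq_bigr => i _ do rewrite exchange_big.
rewrite exchange_big.
under eq_bigr => k _ do rewrite (pair_var _ (fun i => f (x i) k) r0).
rewrite -mulr_sumr /S2 exchange_big; congr (_ * _); apply: eq_bigr => k _.
Qed.

Lemma diff_conf (r N d : nat) (f : ('I_N.+1 -> R) -> ('I_d -> R))
  (y z : 'I_r -> 'I_N.+1 -> R) (c : R) : 0 <= c ->
  (forall i, Defs.edist (f (y i)) (f (z i)) <= c) ->
  \sum_i \sum_k (Conff f y i k - Conff f z i k) ^+ 2 <= r%:R * c ^+ 2.
Proof.
move=> c0 H.
have E : forall i k, Conff f y i k - Conff f z i k =
   (f (y i) k - f (z i) k) - r%:R^-1 * \sum_j (f (y j) k - f (z j) k).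
  by move=> i k; rewrite /Conff sumrB; ring.
under eq_bigr => i _ do under eq_bigr => k _ do rewrite E.
rewrite exchange_big.
apply: (le_trans (ler_sum _ (fun k _ => var_le _ (fun i => f (y i) k - f (z i) k)))).
rewrite exchange_big /=.
have -> : r%:R * c ^+ 2 = \sum_(i < r) c ^+ 2 by rewrite sumr_const card_ord mulr_natl.
apply: ler_sum => i _.
have e0 : 0 <= Defs.edist (f (y i)) (f (z i)) by apply: sqrtr_ge0.
have : Defs.edist (f (y i)) (f (z i)) ^+ 2 <= c ^+ 2 by have := H i; nra.
by rewrite /Defs.edist /enorm sqr_sqrtr // sumr_ge0 // => k _; rewrite sqr_ge0.
Qed.

End Aux.

Theorem theorem4p13 (R : realType) (r N d : nat)
  (hr : (2 <= r)%N) (hN : (r.-1 <= N)%N) (hd : (1 <= d)%N)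
  (f : ('I_N.+1 -> R) -> ('I_d -> R)) :
  almost_r_injective r f ->
  ((Num.sqrt 2 * sin (fine (alpha r f) / 2) * fine (kappa r f))%:E
     <= delta_f f)%E.
Proof.
move=> _.
have r0 : (0 < r)%N by apply: leq_trans hr.
have rR : 0 < r%:R :> R by rewrite ltr0n.
set term := fun x : 'I_r -> 'I_N.+1 -> R => r%:R^-1 *
   Num.sqrt (\sum_(i < r) \sum_(j < r) Defs.edist (f (x i)) (f (x j)) ^+ 2).
have term0 : forall x, 0 <= term x.
  by move=> x; rewrite /term mulr_ge0 // invr_ge0 ler0n.
have ka0 : (0 <= kappa r f)%E.
  by apply: le_ereal_inf_tmp => _ [x _ <-]; rewrite lee_fin; apply: term0.
have kb : forall x, ConfD r N x -> fine (kappa r f) <= term x.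
  move=> x Cx.
  have H : (kappa r f <= (term x)%:E)%E by apply: ereal_inf_lbound; exists x.
  move: ka0 H; case: (kappa r f) => [k| |] //= _.
rewrite /delta_f /delta; apply: le_ereal_inf_tmp => _ [c [c0 okc] <-].
rewrite lee_fin.
set ka := fine (kappa r f).
have ka0' : 0 <= ka by apply: fine_ge0.
have [->|kan0] := eqVneq ka 0; first by rewrite mulr0.
have kapos : 0 < ka by rewrite lt_def kan0.
set t := Num.max (-1) (1 - c ^+ 2 / ka ^+ 2).
have tge : 1 - c ^+ 2 / ka ^+ 2 <= t by rewrite le_max lexx orbT.
have tge1 : -1 <= t by rewrite le_max lexx.
have tle1 : t <= 1.
  rewrite ge_max; apply/andP; split; first by [].
  rewrite lerBlDr lerDl divr_ge0 // sqr_ge0 //.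
have okA : delta_ok (@edist2 R _ _) (ConfD r N) (@geod R r d)
    (fun x => nu (Conff f x)) (acos t).
  move=> x [S [dS fS]].
  have simp : forall i, simplex N (x i) by move=> i; case: (fS i).
  have : forall i, exists O, is_open_d (@Defs.edist R _) O /\ O (x i) /\
     (forall y z, simplex N y -> O y -> simplex N z -> O z ->
        Defs.edist (f y) (f z) <= c).
    by move=> i; exact: okc.
  move=> /choice [Os HOs].
  exists (fun z => forall i, Os i (z i)); split; [|split].
  - move=> y Oy.
    have : forall i, exists e : R, 0 < e /\ forall z, Defs.edist (y i) z < e -> Os i z.
      by move=> i; exact: (HOs i).1 _ (Oy i).
    move=> /choice [es Hes].
    exists (\big[Order.min/1]_i es i); split.
      by apply: lt_bigmin => // i _; exact: (Hes i).1.
    move=> z dz i; apply: (Hes i).2.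
    apply: (@le_lt_trans _ _ (edist2 y z)); first exact: edist_le2.
    apply: (@lt_le_trans _ _ (\big[Order.min/1]_i es i)) => //; exact: bigmin_le.
  - by move=> i; exact: (HOs i).2.1.
  - move=> y z Cy Oy Cz Oz.
    have simpy : forall i, simplex N (y i).
      by case: Cy => S' [_ H] i; case: (H i).
    have simpz : forall i, simplex N (z i).
      by case: Cz => S' [_ H] i; case: (H i).
    have dc : forall i, Defs.edist (f (y i)) (f (z i)) <= c.
      by move=> i; exact: (HOs i).2.2 _ _ (simpy i) (Oy i) (simpz i) (Oz i).
    set M := r%:R * ka ^+ 2 / 2.
    have Mpos : 0 < M by rewrite /M divr_gt0 // mulr_gt0 // exprn_gt0.
    have MA : forall x, ConfD r N x -> M <= S2 (Conff f x) (Conff f x).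
      move=> x' Cx'; have := kb x' Cx'; rewrite /term (@pair_conf R r N d f x' r0) -/ka.
      set Q := S2 _ _; have Q0 : 0 <= Q := S2_ge0 _.
      move=> H.
      have H' : r%:R * ka <= Num.sqrt (2 * r%:R * Q).
        have := ler_wpM2l (ltW rR) H; rewrite mulrA mulfV ?gt_eqF // mul1r.
        by [].
      have sq : Num.sqrt (2 * r%:R * Q) ^+ 2 = 2 * r%:R * Q.
        by rewrite sqr_sqrtr // mulr_ge0 // mulr_ge0 // ltW.
      have rk0 : 0 <= r%:R * ka by rewrite mulr_ge0 // ltW.
      have H2 : (r%:R * ka) ^+ 2 <= 2 * r%:R * Q by rewrite -sq; nra.
      rewrite /M ler_pdivrMr //; nra.
    have D := @diff_conf R r N d f y z c c0 dc.
    have [h1 h2 h3] := angle _ _ _ _ Mpos (MA y Cy) (MA z Cz) D.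
    have enE : forall v : 'I_r -> 'I_d -> R, enorm2 v = Num.sqrt (S2 v v).
      move=> v; rewrite /enorm2 /S2; congr Num.sqrt; apply: eq_bigr => i _.
    rewrite /geod /nu !enE; apply: acos_anti => //.
    rewrite ge_max h1 /=; apply: le_trans h3.
    have -> : r%:R * c ^+ 2 / (2 * M) = c ^+ 2 / ka ^+ 2.
      by rewrite /M; field; rewrite kan0 gt_eqF.
    by [].
have al_le : (alpha r f <= (acos t)%:E)%E.
  apply: ereal_inf_lbound; exists (acos t) => //; split => //.
  by apply: acos_ge0; rewrite tge1 tle1.
have al_ge0 : (0 <= alpha r f)%E.
  by apply: le_ereal_inf_tmp => _ [c' [c'0 _] <-]; rewrite lee_fin.
set al := fine (alpha r f).
have [al0 alle] : 0 <= al /\ al <= acos t.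
  rewrite /al; move: al_le al_ge0; case: (alpha r f) => [k| |] //=.
have cosal : t <= cos al.
  have ia : al \in `[0, pi] by rewrite in_itv /= al0 (le_trans alle) // acos_lepi // tge1 tle1.
  have it : acos t \in `[0, pi] by rewrite in_itv /= acos_ge0 ?acos_lepi // tge1 tle1.
  have ct : cos (acos t) = t by rewrite acosK // in_itv /= tge1 tle1.
  move: alle; rewrite le_eqVlt => /orP [/eqP ->|H]; first by rewrite ct.
  by rewrite -{1}ct ltW // (ltr_cos ia it).
have half : cos al = 1 - 2 * sin (al / 2) ^+ 2.
  rewrite {1}(_ : al = al / 2 + al / 2); last by field.
  by rewrite cosD -!expr2 cos2sin2; ring.
have s2 : Num.sqrt 2 ^+ 2 = 2 :> R by rewrite sqr_sqrtr.
have s20 : 0 <= Num.sqrt 2 :> R by apply: sqrtr_ge0.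
have hk : c ^+ 2 / ka ^+ 2 * ka ^+ 2 = c ^+ 2.
  by rewrite mulfVK // expf_neq0.
have hs : 2 * sin (al / 2) ^+ 2 <= c ^+ 2 / ka ^+ 2 by lra.
have X2 : (Num.sqrt 2 * sin (al / 2) * ka) ^+ 2 <= c ^+ 2.
  rewrite !exprMn s2.
  have k2 : 0 <= ka ^+ 2 by apply: sqr_ge0.
  nra.
nra.
Qed.
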